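(* Let $S$ be a finite, additively commutative, congruence-simple semiring. Then either $(S,+)$ is a group (hence $(S,+,\cdot)$ is a ring), or $S$ has an additively absorbing element, i.e. an element $\alpha$ with $\alpha+x=x+\alpha=\alpha$ for all $x\in S$.
   Context: A semiring is a nonempty set $S$ with two associative binary operations $+$ and $\cdot$ satisfying both distributive laws $a(b+c)=ab+ac$ and $(a+b)c=ac+bc$; no identity elements are assumed. It is additively commutative if $(S,+)$ is commutative. A congruence relation on $S$ is an equivalence relation $\sim$ such that $x_1\sim x_2$ implies $c+x_1\sim c+x_2$, $x_1+c\sim x_2+c$, $cx_1\sim cx_2$, $x_1c\sim x_2c$ for all $c\in S$. $S$ is congruence-simple if its only congruence relations are the identity relation and $S\times S$. *)

(* Defs.v *)
From mathcomp Require Import all_boot.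
Set Implicit Arguments. Unset Strict Implicit. Unset Printing Implicit Defensive.

Definition is_semiring (S : Type) (add mul : S -> S -> S) : Prop :=
  inhabited S /\
  (forall a b c, add a (add b c) = add (add a b) c) /\
  (forall a b c, mul a (mul b c) = mul (mul a b) c) /\
  (forall a b c, mul a (add b c) = add (mul a b) (mul a c)) /\
  (forall a b c, mul (add a b) c = add (mul a c) (mul b c)).

Definition add_commutative (S : Type) (add : S -> S -> S) : Prop :=
  forall a b, add a b = add b a.

Definition is_congruence (S : Type) (add mul : S -> S -> S) (r : S -> S -> Prop) : Prop :=
  (forall x, r x x) /\ (forall x y, r x y -> r y x) /\
  (forall x y z, r x y -> r y z -> r x z) /\
  (forall x1 x2 c, r x1 x2 ->
     r (add c x1) (add c x2) /\ r (add x1 c) (add x2 c) /\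
     r (mul c x1) (mul c x2) /\ r (mul x1 c) (mul x2 c)).

Definition congruence_simple (S : Type) (add mul : S -> S -> S) : Prop :=
  forall r, is_congruence add mul r ->
    (forall x y, r x y <-> x = y) \/ (forall x y, r x y).

Definition add_group (S : Type) (add : S -> S -> S) : Prop :=
  exists z : S, (forall x, add z x = x /\ add x z = x) /\
    (forall x, exists y, add x y = z /\ add y x = z).

Definition add_absorbing (S : Type) (add : S -> S -> S) (a : S) : Prop :=
  forall x, add a x = a /\ add x a = a.

(* Main.v *)
Require Import Defs.
From mathcomp Require Import all_boot.

Lemma fold_split (S : eqType) (add : S -> S -> S) (s0 : S) :
  (forall a b c, add a (add b c) = add (add a b) c) -> add_commutative add ->
  forall (l : seq S) (z : S), z \in l -> exists b, foldr add s0 l = add z b.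
Proof.
move=> A C; elim=> [|h t IH] z //=; rewrite in_cons => /orP [/eqP ->|Hz]; first by exists (foldr add s0 t).
have [b ->] := IH z Hz. exists (add h b).
by rewrite A (C h z) -A.
Qed.

Theorem lemma2p2 (S : finType) (add mul : S -> S -> S) :
  is_semiring add mul -> add_commutative add -> congruence_simple add mul ->
  add_group add \/ exists a : S, add_absorbing add a.
Proof.
move=> [[s0] [A [MA [DL DR]]]] C Hs.
pose r := fun x y => exists z, add x z = add y z.
have Hr : is_congruence add mul r.
  split; first by move=> x; exists s0.
  split; first by move=> x y [z Hz]; exists z.
  split.
    move=> x y u [z Hz] [w Hw]; exists (add z w).
    by rewrite !A Hz -(A y z w) (C z w) (A y w z) Hw -A (C w z) A.
  move=> x1 x2 c [z Hz]; split; [|split; [|split]].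
  - by exists z; rewrite -!A Hz.
  - by exists z; rewrite (C x1 c) (C x2 c) -!A Hz.
  - by exists (mul c z); rewrite -!DL Hz.
  - by exists (mul z c); rewrite -!DR Hz.
case: (Hs r Hr) => [Hid | Htot].
- left.
  have canc : forall x y z, add z x = add z y -> x = y.
    by move=> x y z H; apply/Hid; exists z; rewrite (C x z) (C y z).
  have inj : forall x, injective (add x) by move=> x y1 y2; apply: canc.
  have [g1 g1K K1g] := injF_bij (inj s0).
  pose e := g1 s0.
  have He : forall y, add y e = y.
    move=> y; apply: (canc _ _ s0).
    by rewrite A (C s0 y) -A /e K1g.
  exists e; split; first by move=> x; rewrite C He.
  move=> x; have [g gK Kg] := injF_bij (inj x).
  by exists (g e); rewrite Kg C Kg.
- right.
  pose a := foldr add s0 (enum S).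
  pose c := add s0 a.
  have Hc : forall x, add x a = c.
    move=> x; have [z Hz] := Htot x s0.
    have [b Hb] := @fold_split S add s0 A C (enum S) z
      (mem_enum _ _).
    by rewrite /c /a Hb !A Hz.
  have H1 : forall x, add x c = c by move=> x; rewrite {1}/c A Hc.
  by exists c => x; rewrite C H1.
Qed.
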